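(* Let $l_0\in\mathbb N$ and $G\in\operatorname{2\text{-}d\text{-}Ring}_{l_0}$. If $l_0\ge2$ is even, the vertices alternate between black and white along the cyclic ring order of $G$. If $l_0$ is odd, the colours alternate along the cyclic ring order except for exactly one pair of cyclically consecutive vertices which are both black.
   Context: For a finite vertex set $V$ and $N\ge1$, a route through $V$ of length $N$ is a sequence $\mathbf i=(i_1,\dots,i_N)\in V^N$ whose set of entries equals $V$; its circuit multigraph $G_{\mathbf i}$ has vertex set $V$ and edges $1,\dots,N$, edge $k<N$ from $i_k$ to $i_{k+1}$, edge $N$ from $i_N$ to $i_1$; $\mathcal C_{V,N}$ is the set of these. The black vertices are $B(G_{\mathbf i})=\{i_t:t\text{ odd}\}$, the others white. An undirected connection between $v,w$ (possibly $v=w$) exists if $G$ has an edge from $v$ to $w$ or from $w$ to $v$; $\operatorname U(G)$ is the simple undirected graph (loops allowed) with an edge per undirected connection. A directed multigraph is balanced if its edges split into pairs $(e,e')$ with the head of $e$ the tail of $e'$ and vice versa. $G\in\mathcal C_{V,2l_0}$ with $\#V=l_0$ is of ring-type if $\operatorname U(G)$ is a cycle through all $l_0$ vertices (for $l_0=1$ a single loop, for $l_0=2$ a single edge) and each undirected connection consists of exactly two edges of $G$; $\operatorname{2\text{-}d\text{-}Ring}_{l_0}$ is the set of balanced ring-type graphs with $l_0$ vertices. The ring order is the cyclic order of the vertices along this cycle (for $l_0=1$ the single vertex is consecutive to itself). *)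

(* Defs.v *)
From mathcomp Require Import all_boot.
Set Implicit Arguments. Unset Strict Implicit. Unset Printing Implicit Defensive.

(* A route of length N through the finite vertex set V is a map
   i : 'I_N -> V (0-indexed: i k is the paper's i_{k+1}), with N >= 1,
   whose set of entries is all of V.  The circuit multigraph G_i has edges
   k : 'I_N, edge k going from i k to i (k+1 mod N).  Since edge k's tail is
   i k, G_i determines i, so we identify G_i with i. *)

Section Circuit.
Variables (V : finType) (N : nat) (i : 'I_N -> V).

Definition route : bool := (0 < N) && [forall v, [exists k, i k == v]].

Definition etail (k : 'I_N) : V := i k.
Definition ehead (k : 'I_N) : V := i (ordS k).

(* black vertices: i_t with t odd (1-indexed), i.e. index k with k even *)
Definition black (v : V) : bool := [exists k : 'I_N, ~~ odd k && (i k == v)].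

Definition edge_between (v w : V) (k : 'I_N) : bool :=
  ((etail k == v) && (ehead k == w)) || ((etail k == w) && (ehead k == v)).

Definition uconn (v w : V) : bool := [exists k, edge_between v w k].

(* balanced: the edges split into pairs (e, e') with head e = tail e'
   and tail e = head e'; i.e. a fixed-point-free involution p of the edges *)
Definition balanced : Prop :=
  exists p : 'I_N -> 'I_N, forall k,
    [/\ p (p k) = k, p k != k, etail (p k) = ehead k & ehead (p k) = etail k].

(* c : 'I_#|V| -> V is a ring order: a cyclic enumeration of all vertices
   such that the undirected connections of G are exactly the pairs of
   cyclically consecutive vertices {c j, c (j+1 mod #|V|)}; i.e. U(G) is
   the cycle through all #|V| vertices in this order (a loop if #|V| = 1,
   a single edge if #|V| = 2). *)
Definition ring_order (c : 'I_#|V| -> V) : Prop :=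
  bijective c /\
  forall v w, uconn v w <->
    exists j : 'I_#|V|,
      ((v == c j) && (w == c (ordS j))) || ((w == c j) && (v == c (ordS j))).

Definition ring_type : Prop :=
  (exists c, ring_order c) /\
  forall v w, uconn v w -> #|[set k | edge_between v w k]| = 2.

End Circuit.

(* 2-d-Ring_{l0}: balanced ring-type circuit graphs in C_{V, 2 l0}, #|V| = l0 *)
Definition two_d_ring (V : finType) (i : 'I_(2 * #|V|) -> V) : Prop :=
  [/\ route i, ring_type i & balanced i].

(* Main.v *)
Require Import Defs.
From mathcomp Require Import all_boot.
From Stdlib Require Import ZArith Lia.
From mathcomp Require Import all_boot zify.
Set Implicit Arguments. Unset Strict Implicit.

Lemma oddZ (k : nat) : ~~ odd k <-> (Z.of_nat k mod 2 = 0)%Z.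
Proof.
elim: k => [|k IH] //.
have -> : Z.of_nat k.+1 = (Z.of_nat k + 1)%Z by lia.
rewrite /=; case: (odd k) IH => /= [[_ IH]|[IH _]].
- split=> // _. have := IH. Z.div_mod_to_equations. lia.
- split=> // H. have : (Z.of_nat k mod 2 = 0)%Z by apply: IH.
  move: H. Z.div_mod_to_equations. lia.
Qed.

Lemma ivt_up (f : nat -> Z) : (forall k, f k.+1 = f k + 1 \/ f k.+1 = f k - 1)%Z ->
  forall a n y, (f a <= y < f (a + n)%N)%Z ->
  exists s, a <= s < a + n /\ f s = y /\ f s.+1 = (y + 1)%Z.
Proof.
move=> Hf a n y; elim: n => [|n IH] Hy.
- rewrite addn0 in Hy; lia.
- case: (Z.lt_ge_cases y (f (a + n))) => Hc.
  + have [s [Hs1 [Hs2 Hs3]]] := IH (conj (proj1 Hy) Hc).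
    exists s; split=> //; lia.
  + exists (a + n). rewrite addnS in Hy. have := Hf (a + n). split; [lia|]. lia.
Qed.

Lemma modS_cases (a l : nat) : a < l ->
  (a.+1 < l /\ a.+1 %% l = a.+1) \/ (a.+1 = l /\ a.+1 %% l = 0).
Proof.
move=> Hal. case: (ltngtP a.+1 l) => H.
- by left; rewrite modn_small.
- lia.
- by right; rewrite H modnn.
Qed.

Lemma min_exists (f : nat -> Z) n : exists k, k <= n /\ forall k', k' <= n -> (f k <= f k')%Z.
Proof.
elim: n => [|n [k [Hk IH]]].
- exists 0; split=> // k'; rewrite leqn0 => /eqP ->; lia.
- case: (Z.le_gt_cases (f k) (f n.+1)) => H.
  + exists k; split; first lia. move=> k'; rewrite leq_eqVlt ltnS; case/orP.
    * by move/eqP->.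
    * by apply: IH.
  + exists n.+1; split=> // k'; rewrite leq_eqVlt ltnS; case/orP.
    * move/eqP->; lia.
    * move/IH; lia.
Qed.

Lemma max_exists (f : nat -> Z) n : exists k, k <= n /\ forall k', k' <= n -> (f k' <= f k)%Z.
Proof.
have [k [Hk H]] := min_exists (fun k => - f k)%Z n.
exists k; split=> // k' /H; lia.
Qed.

Lemma cong_eq (l a b : nat) : a < l -> b < l -> (Z.of_nat l | Z.of_nat a - Z.of_nat b)%Z -> a = b.
Proof.
move=> Ha Hb [t Ht].
have Ha' : (Z.of_nat a < Z.of_nat l)%Z by lia.
have Hb' : (Z.of_nat b < Z.of_nat l)%Z by lia.
have : t = 0%Z.
  case: (Z.lt_total t 0) => [Ht0|[//|Ht0]]; nia.
move=> Ht0; subst t; lia.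
Qed.

Lemma cong_uniq (l : nat) (lo y1 y2 : Z) : (lo <= y1 < lo + Z.of_nat l)%Z -> (lo <= y2 < lo + Z.of_nat l)%Z ->
  (Z.of_nat l | y1 - y2)%Z -> y1 = y2.
Proof.
move=> H1 H2 [t Ht].
have : t = 0%Z.
  case: (Z.lt_total t 0) => [Ht0|[//|Ht0]]; nia.
move=> Ht0; subst t; lia.
Qed.

Lemma succ_mod_neq (a l : nat) : 1 < l -> a < l -> a.+1 %% l != a.
Proof. move=> Hl Ha. case: (modS_cases Ha) => [[_ ->]|[E ->]]; apply/eqP; lia. Qed.

Fixpoint lift (l : nat) (P : nat -> nat) (k : nat) : Z :=
  match k with
  | 0 => 0%Z
  | k'.+1 => (lift l P k' + (if P k'.+1 == (P k').+1 %% l then 1 else -1))%Z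
  end.

Lemma lift_step l P k : (lift l P k.+1 = lift l P k + 1 \/ lift l P k.+1 = lift l P k - 1)%Z.
Proof. rewrite /=; case: ifP => _; lia. Qed.

Lemma no_both (l a b : nat) : 2 < l -> a < l -> b < l -> b = a.+1 %% l -> a = b.+1 %% l -> False.
Proof.
move=> Hl Ha Hb.
case: (modS_cases Ha) => [[H1 ->]|[H1 ->]] ->.
- have Hb' : a.+1 < l by [].
  case: (modS_cases Hb') => [[H2 ->]|[H2 ->]]; lia.
- rewrite modn_small; lia.
Qed.

Lemma lift_cong l P (HP : forall k, P k < l)
  (H3 : forall k, P k.+1 = (P k).+1 %% l \/ P k = (P k.+1).+1 %% l) k :
  (Z.of_nat l | Z.of_nat (P k) - Z.of_nat (P 0%N) - lift l P k)%Z.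
Proof.
elim: k => [|k [t Ht]].
  by exists 0%Z; rewrite /=; lia.
rewrite /=. case: ifP => [/eqP E|/negbT/eqP E].
- case: (modS_cases (HP k)) => [[H1 H2]|[H1 H2]]; rewrite H2 in E.
  + exists t. lia.
  + exists (t - 1)%Z. nia.
- case: (H3 k) => // E'.
  case: (modS_cases (HP k.+1)) => [[H1 H2]|[H1 H2]]; rewrite H2 in E'.
  + exists t. lia.
  + exists (t + 1)%Z. nia.
Qed.

Lemma lift_par l P k : ((lift l P k - Z.of_nat k) mod 2 = 0)%Z.
Proof.
elim: k => [|k IH] //.
have -> : Z.of_nat k.+1 = (Z.of_nat k + 1)%Z by lia.
have := lift_step l P k. move: IH. Z.div_mod_to_equations. lia.
Qed.

Lemma lift_per l P N (H2 : forall k, P (k + N) = P k) k :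
  lift l P (k + N) = (lift l P k + lift l P N)%Z.
Proof.
elim: k => [|k IH]; first by rewrite add0n /=; lia.
rewrite addSn /= IH H2 -addSn H2. lia.
Qed.

Definition Bl (P : nat -> nat) (q : nat) : Prop := exists k, P k = q /\ ~~ odd k.

Lemma core_odd (l : nat) (P : nat -> nat) :
  2 < l -> odd l ->
  (forall k, P k < l) ->
  (forall k, P (k + 2 * l) = P k) ->
  (forall k, P k.+1 = (P k).+1 %% l \/ P k = (P k.+1).+1 %% l) ->
  (forall k k', P k = P k' -> P k.+1 = P k'.+1 -> k %% (2 * l) = k' %% (2 * l)) ->
  (forall q, q < l -> exists k, P k = q) ->
  (forall q, q < l -> exists k, (P k = q /\ P k.+1 = q.+1 %% l) \/ (P k = q.+1 %% l /\ P k.+1 = q)) ->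
  exists j0, j0 < l /\ forall j, j < l ->
    if j == j0 then Bl P j /\ Bl P (j.+1 %% l) else (Bl P j <-> ~ Bl P (j.+1 %% l)).
Proof.
move=> Hl Hodd H1 H2 H3 H4 H5 H6.
set N := 2 * l in H2 H4.
have HN : 0 < N by rewrite /N; lia.
have NZ : Z.of_nat N = (2 * Z.of_nat l)%Z by rewrite /N; lia.
set x := lift l P.
have Hstep : forall k, (x k.+1 = x k + 1 \/ x k.+1 = x k - 1)%Z by move=> k; exact: lift_step.
have Hcong : forall k, (Z.of_nat l | Z.of_nat (P k) - Z.of_nat (P 0%N) - x k)%Z.
  by move=> k; exact: lift_cong.
have Hpar : forall k, ((x k - Z.of_nat k) mod 2 = 0)%Z by move=> k; exact: lift_par.
have HlZ : (Z.of_nat l mod 2 = 1)%Z.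
  have : ~ (Z.of_nat l mod 2 = 0)%Z by rewrite -oddZ Hodd.
  have := Z.mod_pos_bound (Z.of_nat l) 2. lia.
have Hcong2 : forall a b, P a = P b -> (Z.of_nat l | x a - x b)%Z.
  move=> a b E. have [t1 E1] := Hcong a. have [t2 E2] := Hcong b.
  exists (t2 - t1)%Z. rewrite E in E1. nia.
have UD : forall s1 s2, (Z.of_nat l | x s1 - x s2)%Z -> (Z.of_nat l | x s1.+1 - x s2.+1)%Z ->
    s1 %% N = s2 %% N.
  have Hc : forall s1 s2, (Z.of_nat l | x s1 - x s2)%Z -> P s1 = P s2.
    move=> s1 s2 [t1 E1]. apply: (cong_eq (H1 s1) (H1 s2)).
    have [t2 E2] := Hcong s1. have [t3 E3] := Hcong s2.
    exists (t2 - t3 + t1)%Z. nia.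
  move=> s1 s2 Ha Hb. apply: H4; exact: Hc.
have HxN : x N = 0%Z.
  have HPN : P N = P 0 by have := H2 0; rewrite add0n.
  have [t Ht] := Hcong N. rewrite HPN in Ht.
  have HpN := Hpar N. rewrite NZ in HpN.
  have Hx0 : x 0 = 0%Z by [].
  case: (Z.lt_ge_cases (Z.of_nat l) (x N)) => Hc1.
  - have Hs : forall y, (0 <= y < x N)%Z -> exists s, s < N /\ x s = y /\ x s.+1 = (y+1)%Z.
      move=> y Hy. have := @ivt_up x Hstep 0 N y. rewrite add0n Hx0.
      case=> // s [Hs [E1 E2]]. exists s; split => //; lia.
    have [s1 [Hs1 [E1 F1]]] := Hs 0%Z ltac:(lia).
    have [s2 [Hs2 [E2 F2]]] := Hs (Z.of_nat l) ltac:(lia).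
    have := UD s1 s2. rewrite !modn_small // => E.
    have E' : s1 = s2.
      apply: E; [exists (-1)%Z | exists (-1)%Z]; rewrite ?E1 ?E2 ?F1 ?F2; lia.
    subst s2. lia.
  case: (Z.lt_ge_cases (x N) (- Z.of_nat l)) => Hc2.
  - have Hstep' : forall k, ((- x k.+1) = (- x k) + 1 \/ (- x k.+1) = (- x k) - 1)%Z.
      move=> k; have := Hstep k; lia.
    have Hs : forall y, (0 <= y < - x N)%Z -> exists s, s < N /\ x s = (- y)%Z /\ x s.+1 = (- y - 1)%Z.
      move=> y Hy. have := @ivt_up (fun k => - x k)%Z Hstep' 0 N y. rewrite add0n Hx0.
      case=> /=; first lia. move=> s [Hs [E1 E2]]. exists s; split => //; lia.
    have [s1 [Hs1 [E1 F1]]] := Hs 0%Z ltac:(lia).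
    have [s2 [Hs2 [E2 F2]]] := Hs (Z.of_nat l) ltac:(lia).
    have := UD s1 s2. rewrite !modn_small // => E.
    have E' : s1 = s2.
      apply: E; [exists 1%Z | exists 1%Z]; rewrite ?E1 ?E2 ?F1 ?F2; lia.
    subst s2. lia.
  have : (-1 <= t <= 1)%Z by nia.
  move=> Ht1.
  have : (t = -1 \/ t = 0 \/ t = 1)%Z by lia.
  case=> [Et|[Et|Et]]; subst t.
  - exfalso. move: HpN HlZ. Z.div_mod_to_equations. lia.
  - lia.
  - exfalso. move: HpN HlZ. Z.div_mod_to_equations. lia.
have Hper : forall m k, x (k + m * N) = x k.
  elim=> [|m IH] k; first by rewrite mul0n addn0.
  rewrite mulSn addnA IH /x lift_per //. rewrite -/x HxN. lia.
have Hmod : forall k, x k = x (k %% N).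
  move=> k. by rewrite {1}(divn_eq k N) addnC Hper.
have [klo [_ Hlo0]] := min_exists x N.-1.
have [khi [_ Hhi0]] := max_exists x N.-1.
have Hlo : forall k, (x klo <= x k)%Z.
  move=> k. rewrite (Hmod k). apply: Hlo0. have := ltn_pmod k HN. lia.
have Hhi : forall k, (x k <= x khi)%Z.
  move=> k. rewrite (Hmod k). apply: Hhi0. have := ltn_pmod k HN. lia.
set lo := x klo in Hlo. set hi := x khi in Hhi.
have Hge : (Z.of_nat l <= hi - lo)%Z.
  have [k [[Ea Eb]|[Ea Eb]]] := H6 (P khi) (H1 khi).
  - have Hx : x k.+1 = (x k + 1)%Z by rewrite /x /= Eb Ea eqxx.
    have [t Et] := Hcong2 _ _ Ea.
    have := Hlo k. have := Hhi k.+1. rewrite -/hi Hx => A B.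
    have : (t <= -1)%Z by nia.
    nia.
  - have Hx : x k.+1 = (x k - 1)%Z.
      rewrite /x /=. case: eqP => // E. exfalso.
      apply: (@no_both l (P khi) (P k)) => //. by rewrite -Eb.
    have [t Et] := Hcong2 _ _ Eb.
    have := Hlo k.+1. have := Hhi k. rewrite -/hi Hx => A B.
    have : (t <= -1)%Z by nia.
    nia.
have Hle : (hi - lo <= Z.of_nat l)%Z.
  case: (Z.le_gt_cases (hi - lo) (Z.of_nat l)) => // Hc.
  have Hb : x (khi + klo * N) = hi by rewrite Hper.
  have Hkb : klo <= khi + klo * N.
    apply: leq_trans (leq_addl khi _). by rewrite leq_pmulr.
  have Hiv := @ivt_up x Hstep klo (khi + klo * N - klo).
  rewrite subnKC // Hb in Hiv.
  have [s1 [_ [E1 F1]]] := Hiv lo ltac:(lia).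
  have [s2 [_ [E2 F2]]] := Hiv (lo + Z.of_nat l)%Z ltac:(lia).
  have E := UD s1 s2.
  have E' : s1 %% N = s2 %% N.
    apply: E; [exists (-1)%Z | exists (-1)%Z]; rewrite ?E1 ?E2 ?F1 ?F2; lia.
  have := Hmod s1; have := Hmod s2. rewrite E'. lia.
have Hhilo : hi = (lo + Z.of_nat l)%Z by lia.
have Hlpos : (0 < Z.of_nat l)%Z by lia.
have Hy : forall q : nat, exists y, (lo <= y < lo + Z.of_nat l)%Z /\
    (Z.of_nat l | Z.of_nat q - Z.of_nat (P 0%N) - y)%Z.
  move=> q. set r := (Z.of_nat q - Z.of_nat (P 0%N) - lo)%Z.
  exists (lo + r mod Z.of_nat l)%Z. split.
  - have := Z.mod_pos_bound r (Z.of_nat l). lia.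
  - exists (r / Z.of_nat l)%Z. have := Z.div_mod r (Z.of_nat l). rewrite /r. lia.
have Hclose : forall z y, (lo <= z <= lo + Z.of_nat l)%Z -> (lo <= y < lo + Z.of_nat l)%Z ->
    (Z.of_nat l | z - y)%Z -> z = y \/ (z = (y + Z.of_nat l)%Z /\ y = lo).
  move=> z y Hz Hy' [t Et].
  have : (0 <= t <= 1)%Z by nia.
  move=> Ht. have : (t = 0 \/ t = 1)%Z by lia.
  case=> Et'; subst t; lia.
have Hxr : forall k, (lo <= x k <= lo + Z.of_nat l)%Z.
  move=> k. have := Hlo k. have := Hhi k. lia.
have Hcls : forall q y, q < l -> (lo <= y < lo + Z.of_nat l)%Z ->
    (Z.of_nat l | Z.of_nat q - Z.of_nat (P 0%N) - y)%Z ->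
    (Bl P q <-> ((y mod 2 = 0)%Z \/ y = lo)).
  move=> q y Hq Hyr Hyc. split.
  - case=> k [Pk Ok].
    have Hk0 := (oddZ k).1 Ok. have Hpk := Hpar k.
    have Hd : (Z.of_nat l | x k - y)%Z.
      have [t1 E1] := Hcong k. have [t2 E2] := Hyc. rewrite Pk in E1.
      exists (t2 - t1)%Z. nia.
    case: (Hclose _ _ (Hxr k) Hyr Hd) => [E|[E E']].
    + left. move: Hk0 Hpk. rewrite E. Z.div_mod_to_equations. lia.
    + by right.
  - have Hq' : forall k, (Z.of_nat l | x k - y)%Z -> P k = q.
      move=> k [t1 E1]. apply: (cong_eq (H1 k) Hq).
      have [t2 E2] := Hcong k. have [t3 E3] := Hyc.
      exists (t2 - t3 + t1)%Z. nia.
    case: (Z.eq_dec y lo) => [Eyl|Nyl] Hyp.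
    + have Pklo : P klo = q by apply: Hq'; exists 0%Z; rewrite -/lo Eyl; lia.
      have Pkhi : P khi = q by apply: Hq'; exists 1%Z; rewrite -/hi Eyl; lia.
      case: (Z.eq_dec (lo mod 2) 0) => Hl2.
      * exists klo; split => //. apply/oddZ.
        have := Hpar klo. rewrite -/lo. move: Hl2. Z.div_mod_to_equations. lia.
      * exists khi; split => //. apply/oddZ.
        have := Hpar khi. rewrite -/hi Hhilo. move: Hl2 HlZ. Z.div_mod_to_equations. lia.
    + have [k Pk] := H5 q Hq.
      have Hd : (Z.of_nat l | x k - y)%Z.
        have [t1 E1] := Hcong k. have [t2 E2] := Hyc. rewrite Pk in E1.
        exists (t2 - t1)%Z. nia.
      have Exk : x k = y by case: (Hclose _ _ (Hxr k) Hyr Hd) => [//|[_ E]]; lia.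
      exists k; split => //. apply/oddZ.
      have := Hpar k. rewrite Exk. move: Hyp. case=> [Hyp|//].
      move: Hyp. Z.div_mod_to_equations. lia.
set T := if (lo mod 2 =? 0)%Z then (lo + Z.of_nat l - 1)%Z else lo.
have HT : (lo <= T < lo + Z.of_nat l)%Z by rewrite /T; case: Z.eqb; lia.
have Hz0 := Z.mod_pos_bound (Z.of_nat (P 0%N) + T) (Z.of_nat l) Hlpos.
have [j0 Ej0] : exists j0, Z.of_nat j0 = ((Z.of_nat (P 0%N) + T) mod Z.of_nat l)%Z.
  exists (Z.to_nat ((Z.of_nat (P 0%N) + T) mod Z.of_nat l)). rewrite Z2Nat.id //; lia.
have Hj0 : j0 < l.
  have : (Z.of_nat j0 < Z.of_nat l)%Z by rewrite Ej0; lia.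
  lia.
have Hj0c : (Z.of_nat l | Z.of_nat j0 - Z.of_nat (P 0%N) - T)%Z.
  exists (- ((Z.of_nat (P 0%N) + T) / Z.of_nat l))%Z. rewrite Ej0.
  have := Z.div_mod (Z.of_nat (P 0%N) + T) (Z.of_nat l). lia.
exists j0; split => // j Hj.
have [yj [Hyj Hyjc]] := Hy j.
have [yn [Hyn Hync]] := Hy (j.+1 %% l).
have Hnext : (yj + 1 < lo + Z.of_nat l /\ yn = yj + 1)%Z \/ (yj = lo + Z.of_nat l - 1 /\ yn = lo)%Z.
  have [a Ea] := Hync. have [b Eb] := Hyjc.
  case: (modS_cases Hj) => [[Hj1 Hj2]|[Hj1 Hj2]]; rewrite Hj2 in Ea;
  (case: (Z.lt_ge_cases (yj + 1) (lo + Z.of_nat l)) => Hc; [left|right]; split => //; try lia);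
  apply: (@cong_uniq l lo); try lia;
  first [exists (b - a)%Z; nia | exists (b - a + 1)%Z; nia | exists (b - a - 1)%Z; nia].
have Hiff : j = j0 <-> yj = T.
  split.
  - move=> Ej; subst j. apply: (cong_uniq Hyj HT).
    have [a Ea] := Hyjc. have [b Eb] := Hj0c. exists (b - a)%Z. nia.
  - move=> Ey. apply: (cong_eq Hj Hj0).
    have [a Ea] := Hyjc. have [b Eb] := Hj0c. exists (a - b)%Z. nia.
have Bj := Hcls j yj Hj Hyj Hyjc.
have Bn := Hcls _ yn (ltn_pmod _ (ltnW (ltnW Hl))) Hyn Hync.
case: eqP => [Ej|Nej].
- have EyT := Hiff.1 Ej. split; [apply: Bj.2 | apply: Bn.2];
  move: EyT; rewrite /T; case: (Z.eqb_spec (lo mod 2) 0) => Hlo2 EyT;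
  move: Hnext Hlo2 HlZ; Z.div_mod_to_equations; lia.
- have NyT : yj <> T by move=> E; apply: Nej; apply: Hiff.2.
  split.
  + move=> /Bj.1 A /Bn.1 B. move: A B NyT Hnext HlZ. rewrite /T.
    case: (Z.eqb_spec (lo mod 2) 0); Z.div_mod_to_equations; lia.
  + move=> NB. apply: Bj.2.
    have : ~ ((yn mod 2 = 0)%Z \/ yn = lo) by move=> H; apply: NB; apply: Bn.2.
    move: NyT Hnext HlZ. rewrite /T.
    case: (Z.eqb_spec (lo mod 2) 0); Z.div_mod_to_equations; lia.
Qed.

Lemma core_even (l : nat) (P : nat -> nat) :
  0 < l -> ~~ odd l ->
  (forall k, P k < l) ->
  (forall k, P k.+1 = (P k).+1 %% l \/ P k = (P k.+1).+1 %% l) ->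
  (forall q, q < l -> exists k, P k = q) ->
  forall j, j < l -> (Bl P j <-> ~ Bl P (j.+1 %% l)).
Proof.
move=> Hl Hev H1 H3 H5.
have flip : forall a, a < l -> odd (a.+1 %% l) = ~~ odd a.
  move=> a Ha. case: (modS_cases Ha) => [[_ ->]|[E ->]] //=.
  have : odd a.+1 = odd l by rewrite E.
  by rewrite /= (negbTE Hev) => /negbFE ->.
have Hod : forall k, odd (P k) = odd (P 0) (+) odd k.
  elim=> [|k IH]; first by rewrite addbF.
  have E : odd (P k.+1) = ~~ odd (P k).
    case: (H3 k) => E; first by rewrite E flip.
    by rewrite E flip // negbK.
  rewrite E IH /=. by case: (odd (P 0)); case: (odd k).
have HB : forall q, q < l -> (Bl P q <-> odd q = odd (P 0)).
  move=> q Hq; split.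
  - case=> k [<- Ok]. by rewrite Hod (negbTE Ok) addbF.
  - move=> Eq. have [k Pk] := H5 q Hq. exists k; split => //.
    have := Hod k. rewrite Pk Eq. by case: (odd (P 0)); case: (odd k).
move=> j Hj. rewrite (HB _ Hj) (HB _ (ltn_pmod _ Hl)) flip //.
by case: (odd j); case: (odd (P 0)).
Qed.

Unset Implicit Arguments.

Theorem lemma4p8 (V : finType) (i : 'I_(2 * #|V|) -> V) :
  two_d_ring i ->
  forall c : 'I_#|V| -> V, ring_order i c ->
    (~~ odd #|V| -> 2 <= #|V| ->
       forall j : 'I_#|V|, black i (c j) != black i (c (ordS j))) /\
    (odd #|V| ->
       exists j0 : 'I_#|V|, forall j : 'I_#|V|,
         if j == j0 then black i (c j) && black i (c (ordS j))
         else black i (c j) != black i (c (ordS j))).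
Proof.
move=> [Hroute [_ Hring] [p Hp]] c [[g Hcg Hgc] Hc].
have Npos : 0 < 2 * #|V| by case/andP: Hroute.
pose I k := i (Ordinal (ltn_pmod k Npos)).
have I_ord : forall k : 'I_(2 * #|V|), I k = i k.
  move=> k. congr i; apply: val_inj; rewrite /= modn_small //.
have I_S : forall k, I k.+1 = i (ordS (Ordinal (ltn_pmod k Npos))).
  move=> k. congr i; apply: val_inj. by rewrite /= -(addn1 k) -(addn1 (k %% _)) modnDml.
have I_S' : forall e : 'I_(2 * #|V|), I e.+1 = i (ordS e).
  move=> e. by congr i; apply: val_inj.
pose P k := val (g (I k)).
have Pc : forall j, val (g (c j)) = val j by move=> j; rewrite Hcg.
have uconn_step : forall k, uconn i (I k) (I k.+1).
  move=> k. apply/existsP. exists (Ordinal (ltn_pmod k Npos)).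
  rewrite /edge_between /etail /ehead -I_S. by apply/orP; left; apply/andP; split; apply/eqP.
have H1 : forall k, P k < #|V| by move=> k; exact: ltn_ord.
have H3 : forall k, P k.+1 = (P k).+1 %% #|V| \/ P k = (P k.+1).+1 %% #|V|.
  move=> k. have [j /orP [/andP [/eqP E1 /eqP E2]|/andP [/eqP E1 /eqP E2]]] :=
    (Hc (I k) (I k.+1)).1 (uconn_step k).
  - left. by rewrite /P E1 E2 !Pc.
  - right. by rewrite /P E1 E2 !Pc.
have H2 : forall k, P (k + 2 * #|V|) = P k.
  move=> k. rewrite /P /I. congr (val (g (i _))). apply: val_inj. by rewrite /= modnDr.
have H5 : forall q, q < #|V| -> exists k, P k = q.
  move=> q Hq. case/andP: Hroute => _ /forallP /(_ (c (Ordinal Hq))) /existsP [k /eqP Hk].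
  exists k. by rewrite /P I_ord Hk Pc.
have H6 : forall q, q < #|V| -> exists k, (P k = q /\ P k.+1 = q.+1 %% #|V|) \/
                                      (P k = q.+1 %% #|V| /\ P k.+1 = q).
  move=> q Hq. set jq := Ordinal Hq.
  have : uconn i (c jq) (c (ordS jq)).
    apply/(Hc _ _).2. exists jq. by rewrite !eqxx.
  case/existsP=> e. rewrite /edge_between /etail /ehead -I_ord -I_S'.
  case/orP=> /andP [/eqP E1 /eqP E2]; exists e; [left|right];
  by rewrite /P E1 E2 !Pc.
have Hblack : forall v, black i v <-> Bl P (val (g v)).
  move=> v. split.
  - case/existsP=> k /andP [Ok /eqP Hv]. exists k. by rewrite /P I_ord Hv.
  - case=> k [Pk Ok]. have Iv : I k = v.
      by rewrite -(Hgc (I k)) -(Hgc v); congr c; apply: val_inj.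
    apply/existsP. exists (Ordinal (ltn_pmod k Npos)).
    rewrite /= odd_mod; last by rewrite oddM.
    by rewrite Ok -Iv eqxx.
have Ieq : forall a b, P a = P b -> I a = I b.
  move=> a b Eab. by rewrite -(Hgc (I a)) -(Hgc (I b)); congr c; apply: val_inj.
have H4 : 1 < #|V| -> forall k k', P k = P k' -> P k.+1 = P k'.+1 ->
    k %% (2 * #|V|) = k' %% (2 * #|V|).
  move=> Hl2 k k' E E'.
  have Ekk := Ieq _ _ E. have Ekk' := Ieq _ _ E'.
  have Hvw : I k != I k.+1.
    apply/eqP => Evw. have : P k = P k.+1 by rewrite /P Evw.
    case: (H3 k) => ->.
    - by apply/eqP; rewrite eq_sym; apply: succ_mod_neq.
    - by apply/eqP; apply: succ_mod_neq.
  set e1 := Ordinal (ltn_pmod k Npos). set e2 := Ordinal (ltn_pmod k' Npos).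
  case: (eqVneq e1 e2) => [/(congr1 val) //|n12]. exfalso.
  set S := [set e | edge_between i (I k) (I k.+1) e].
  have HS : #|S| = 2 := Hring _ _ (uconn_step k).
  have [_ Hpn Ht Hh] := Hp e1.
  have t1 : etail i e1 = I k by [].
  have h1 : ehead i e1 = I k.+1 by rewrite /ehead I_S.
  have t2 : etail i e2 = I k by rewrite /etail Ekk.
  have h2 : ehead i e2 = I k.+1 by rewrite /ehead Ekk' I_S.
  have in1 : e1 \in S by rewrite inE /edge_between t1 h1 !eqxx.
  have in2 : e2 \in S by rewrite inE /edge_between t2 h2 !eqxx.
  have in3 : p e1 \in S by rewrite inE /edge_between Ht Hh t1 h1 !eqxx orbT.
  have n13 : e1 != p e1 by rewrite eq_sym.
  have n23 : e2 != p e1.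
    apply/eqP => E23. have : etail i e2 = etail i (p e1) by rewrite E23.
    rewrite t2 Ht h1 => E0. by rewrite E0 eqxx in Hvw.
  have : #|e1 |: [set e2; p e1]| <= #|S|.
    apply: subset_leq_card. apply/subsetP => e.
    by move=> /setU1P [->|/set2P [->|->]].
  by rewrite HS cardsU1 cards2 !inE negb_or n12 n13 n23.
split.
- move=> Hev Hl2 j.
  have Hiff := core_even (ltnW Hl2) Hev H1 H3 H5 (ltn_ord j).
  have B1 := Hblack (c j). have B2 := Hblack (c (ordS j)). rewrite !Pc in B1 B2.
  apply/negP => /eqP E.
  case Hb: (black i (c j)) in E.
  + have Bj : Bl P j by apply/B1. have Bn : Bl P (j.+1 %% #|V|) by apply/B2; rewrite -E.
    exact: (Hiff.1 Bj Bn).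
  + have NBj : ~ Bl P j by move/B1; rewrite Hb.
    have NBn : ~ Bl P (j.+1 %% #|V|) by move/B2; rewrite -E.
    exact: (NBj (Hiff.2 NBn)).
- move=> Hodd.
  have Hl0 : 0 < #|V| by move: Hodd; case: #|V|.
  have : (#|V| == 1) || (2 < #|V|) by move: Hodd; case: #|V| => [|[|[|n]]].
  case/orP => [/eqP E1|Hl3].
  + exists (Ordinal Hl0) => j.
    have z0 : forall x : 'I_#|V|, nat_of_ord x = 0.
      move=> x. have := ltn_ord x. rewrite [X in _ < X]E1. by case: (nat_of_ord x).
    have -> : j == Ordinal Hl0 by apply/eqP; apply: val_inj; rewrite /= z0.
    have Hall : forall v, black i v.
      move=> v. apply/(Hblack v).2. exists 0; split => //.
      exact: (etrans (z0 _) (esym (z0 _))).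
    by rewrite !Hall.
  + have [j0 [Hj0 Hall]] := core_odd Hl3 Hodd H1 H2 H3 (H4 (ltnW Hl3)) H5 H6.
    exists (Ordinal Hj0) => j.
    have := Hall j (ltn_ord j).
    have -> : (j == Ordinal Hj0) = (val j == j0) by [].
    have B1 := Hblack (c j). have B2 := Hblack (c (ordS j)). rewrite !Pc in B1 B2.
    case: eqP => _.
    * move=> [Bj Bn]. apply/andP; split; [exact/B1 | exact/B2].
    * move=> Hiff. apply/negP => /eqP E.
      case Hb: (black i (c j)) in E.
      -- have Bj : Bl P j by apply/B1.
         have Bn : Bl P (j.+1 %% #|V|) by apply/B2; rewrite -E.
         exact: (Hiff.1 Bj Bn).
      -- have NBj : ~ Bl P j by move/B1; rewrite Hb.
         have NBn : ~ Bl P (j.+1 %% #|V|) by move/B2; rewrite -E.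
         exact: (NBj (Hiff.2 NBn)).
Qed.
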